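(* (Subspace identification of the nonstationary latent variables.) Consider observed data generated by the latent-variable process described in the context. Assume: (A3.3.1, smooth and positive density) the density $p(\mathbf{z}^e_t\mid e_t)$ is smooth and positive over $\mathcal{Z}_t$ and $\mathcal{E}_t$; (A3.3.2, conditional independence) conditioned on $e_t$, the components $z^e_{t,i}$, $i\in\{1,\dots,n_e\}$, are mutually independent, i.e. $\log p(\mathbf{z}^e_t\mid e_t)=\sum_{i=1}^{n_e}\log p(z^e_{t,i}\mid e_t)$; (A3.3.3, linear independence) for any $\mathbf{z}^e_t\in\mathcal{Z}^e_t\subseteq\mathbb{R}^{n_e}$ there exist $n_e+1$ values of the environment, $e_j$ with $j=1,\dots,n_e+1$, such that the $n_e$ vectors $\mathbf{w}(\mathbf{z}^e_t,e_j)-\mathbf{w}(\mathbf{z}^e_t,e_0)$ are linearly independent, where $$\mathbf{w}(\mathbf{z}^e_t,e)=\left(\frac{\partial\log p(z^e_{t,1}\mid e)}{\partial z^e_{t,1}},\dots,\frac{\partial\log p(z^e_{t,n_e}\mid e)}{\partial z^e_{t,n_e}}\right).$$ Then, by learning the data generation process, $\mathbf{z}^e_t$ is subspace identifiable.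
   Context: Data generation process: $e_t\in\{1,\dots,E\}$ is a latent discrete environment forming a first-order Markov chain. The latent state is $\mathbf{z}_t=(\mathbf{z}^e_t,\mathbf{z}^s_t)\in\mathbb{R}^n$ with $\mathbf{z}^e_t=(z_{t,1},\dots,z_{t,n_e})$ nonstationary, $z^e_{t,i}=f^e_i(e_t,\epsilon^e_{t,i})$, and $\mathbf{z}^s_t=(z_{t,n_e+1},\dots,z_{t,n})\in\mathbb{R}^{n_s}$, $n_s=n-n_e$, stationary, $z^s_{t,i}=f^s_i(\mathbf{z}^s_{t-1},\epsilon^s_{t,i})$; noise terms are mutually independent and independent of past latents and environments. Observations are $\mathbf{x}_t=g(\mathbf{z}_t)$ with $g$ invertible. ''Learning the data generation process'' means fitting an estimated model of the same form (estimated latents $\hat{\mathbf{z}}_t=(\hat{\mathbf{z}}^e_t,\hat{\mathbf{z}}^s_t)$ with the same dimensions and the same conditional-independence structure given $\hat{\mathbf{z}}_{t-1}$ and $e_t$, invertible decoder $\hat g$) whose observational distribution matches the true one, so that $h=g^{-1}\circ\hat g$ is an invertible smooth map with $\mathbf{z}_t=h(\hat{\mathbf{z}}_t)$. Subspace identifiability of $\mathbf{z}^e_t$ means that for each true component $z^e_{t,i}$, $i\in\{1,\dots,n_e\}$, there exists a function $h_i$ with $z^e_{t,i}=h_i(\hat{\mathbf{z}}^e_t)$, i.e. the true nonstationary latents depend only on the estimated nonstationary latents. *)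

(* Defs.v *)
From HB Require Import structures.
From mathcomp Require Import all_boot all_order all_algebra.
From mathcomp Require Import all_classical all_reals all_analysis.
Set Implicit Arguments. Unset Strict Implicit. Unset Printing Implicit Defensive.
Import Order.TTheory GRing.Theory Num.Theory.
Import numFieldNormedType.Exports.
Local Open Scope classical_set_scope.
Local Open Scope ring_scope.

Section Defs.
Variable R : realType.

Fixpoint iterD (V W : normedModType R) (f : V -> W) (vs : seq V) : V -> W :=
  match vs with
  | [::] => f
  | v :: vs' => fun x => 'D_v (iterD f vs') x
  end.

Definition smooth (V W : normedModType R) (f : V -> W) : Prop :=
  forall (vs : seq V) (x : V), differentiable (iterD f vs) x.

Definition density1 (f : R -> R) : Prop :=
  [/\ (forall x, 0 <= f x), measurable_fun setT f &
      (\int[lebesgue_measure]_x (f x)%:E = 1)%E].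

(* w(z^e, e) = (d/dz_i log p(z^e_i | e))_i, from the marginal densities
   pm e i = p(z^e_{t,i} | e_t = e). *)
Definition wvec (E ne : nat) (pm : 'I_E -> 'I_ne -> R -> R)
    (ze : 'rV[R]_ne) (e : 'I_E) : 'rV[R]_ne :=
  \row_i (derive1 (fun y => ln (pm e i y)) (ze 0 i)).

End Defs.

(* Main.v *)
Require Import Defs.
From HB Require Import structures.
From mathcomp Require Import all_boot all_order all_algebra.
From mathcomp Require Import all_classical all_reals all_analysis.
Import Order.TTheory GRing.Theory Num.Theory.
Import numFieldNormedType.Exports.
Local Open Scope classical_set_scope.
Local Open Scope ring_scope.

Section H.
Variable R : realType.

Lemma ln_prod (I : finType) (F : I -> R) : (forall i, 0 < F i) ->
  ln (\prod_i F i) = \sum_i ln (F i).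
Proof.
move=> Fp.
suff [] : 0 < \prod_i F i /\ ln (\prod_i F i) = \sum_i ln (F i) by [].
elim/big_ind2 : _ => [|s1 p1 s2 p2 [h1 e1] [h2 e2]|i _].
- by rewrite ln1.
- by rewrite mulr_gt0 // lnM ?posrE // e1 e2.
- by [].
Qed.

Lemma pm_pos E ne (pe : 'I_E -> 'rV[R]_ne -> R) (pm : 'I_E -> 'I_ne -> R -> R) :
  (forall e ze, 0 < pe e ze) ->
  (forall e i, density1 (pm e i)) ->
  (forall e ze, pe e ze = \prod_(i < ne) pm e i (ze 0 i)) ->
  forall e k y, 0 < pm e k y.
Proof.
move=> hpos hd hprod e k y.
have [h0 _ _] := hd e k.
rewrite lt0r h0 andbT.
apply/negP => /eqP hz.
have := hpos e (const_mx y); rewrite hprod.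
suff -> : \prod_(i < ne) pm e i ((const_mx y : 'rV[R]_ne) 0 i) = 0 by rewrite ltxx.
by rewrite (bigD1 k) //= mxE hz mul0r.
Qed.

Lemma D_coord E ne (pe : 'I_E -> 'rV[R]_ne -> R) (pm : 'I_E -> 'I_ne -> R -> R) :
  (forall e ze, 0 < pe e ze) ->
  (forall e i, density1 (pm e i)) ->
  (forall e ze, pe e ze = \prod_(i < ne) pm e i (ze 0 i)) ->
  forall e i ze, 'D_(delta_mx 0 i) (fun z => ln (pe e z)) ze =
     derive1 (fun y => ln (pm e i y)) (ze 0 i).
Proof.
move=> hpos hd hprod e i ze.
have pp := @pm_pos _ _ _ _ hpos hd hprod.
have L : forall z, ln (pe e z) = \sum_k ln (pm e k (z 0 k)).
  by move=> z; rewrite hprod ln_prod.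
rewrite /derive /derive1; do 2 f_equal; apply: funext => h /=.
congr (_ *: _); rewrite !L (bigD1 i) //= [X in _ - X](bigD1 i) //=.
rewrite !mxE /=.
have -> : (i == i) = true by apply/eqP.
rewrite mulr1.
suff -> : \sum_(k | k != i) ln (pm e k ((h *: delta_mx 0 i + ze) 0 k)) =
  \sum_(k | k != i) ln (pm e k (ze 0 k)).
  by rewrite opprD addrACA subrr addr0.
apply: eq_bigr => k ki; rewrite !mxE /=.
have -> : (k == i) = false by apply/negbTE.
by rewrite mulr0 add0r.
Qed.

Lemma mul1_neq0 (a b : R) : a * b = 1 -> b != 0.
Proof.
move=> H; apply/eqP => b0; move: H; rewrite b0 mulr0 => H.
by have := @oner_neq0 R; rewrite -H eqxx.
Qed.

Lemma det_ne0 n (h hinv : 'rV[R]_n -> 'rV[R]_n) :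
  cancel h hinv -> cancel hinv h ->
  (forall x, differentiable h x) -> (forall x, differentiable hinv x) ->
  forall x, \det ('J h x) != 0.
Proof.
move=> hK hiK dh dhi x.
rewrite -[x]hK; move: (h x) => y.
have comp : forall u, 'd h (hinv y) ('d hinv y u) = u.
  move=> u.
  have e : h \o hinv = id by apply: funext => z /=; rewrite hiK.
  have dc : differentiable (h \o hinv) y := differentiable_comp (dhi y) (dh (hinv y)).
  have := diff_comp (dhi y) (dh (hinv y)) => /(congr1 (fun f => f u)) /= <-.
  rewrite -deriveE // e. exact: (@derive_id R _ y u).
have M : 'J hinv y *m 'J h (hinv y) = 1%:M.
  apply/row_matrixP => k.
  rewrite row_mul rowE -(deriveEjacobian _ (dhi y)) -(deriveEjacobian _ (dh (hinv y))).
  rewrite (deriveE _ (dhi y)) (deriveE _ (dh (hinv y))) comp.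
  by rewrite rowE mulmx1.
have := congr1 determinant M.
rewrite (@det_mulmx R n (jacobian hinv y) (jacobian h (hinv y))) (@det1 R n) => H.
exact: (@mul1_neq0 _ _ H).
Qed.

Lemma const_line N (g : 'rV[R]_N -> R) (x v : 'rV[R]_N) :
  (forall y, differentiable g y) -> (forall y, 'd g y v = 0) -> g (v + x) = g x.
Proof.
move=> dg g0.
pose phi (t : R) := g (t *: v + x).
have E : forall t, (fun h : R => h^-1 *: ((phi \o shift t) (h *: 1) - phi t)) =
   (fun h : R => h^-1 *: ((g \o shift (t *: v + x)) (h *: v) - g (t *: v + x))).
  move=> t; apply: funext => h /=; rewrite /phi.
  have -> : (h%:A : R) = h by apply: mulr1.
  by rewrite scalerDl addrA.
have D : forall t : R, is_derive t (1:R) phi 0.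
  move=> t; split.
    rewrite /derivable E; exact: diff_derivable.
  by rewrite /derive E -/(derive g _ v) deriveE.
have := is_derive_0_is_cst 1 0 D.
by rewrite /phi scale1r scale0r add0r.
Qed.

Lemma derive_const_dir n (F : 'rV[R]_n -> R) x v :
  (forall t : R, F (t *: v + x) = F x) -> 'D_v F x = 0.
Proof.
move=> H; rewrite /derive.
have -> : (fun h : R => h^-1 *: ((F \o shift x) (h *: v) - F x)) = fun _ => 0.
  by apply: funext => t /=; rewrite H subrr scaler0.
exact: lim_cst.
Qed.
End H.

Theorem theorem3p3 (R : realType) (ne ns E : nat)
  (* true model: p(z^e_t | e_t), its marginals p(z^e_{t,i} | e_t),
     and the (environment-free) density of the stationary part z^s_t *)
  (pe : 'I_E -> 'rV[R]_ne -> R) (pm : 'I_E -> 'I_ne -> R -> R)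
  (ps : 'rV[R]_ns -> R)
  (* estimated model of the same form *)
  (pe' : 'I_E -> 'rV[R]_ne -> R) (pm' : 'I_E -> 'I_ne -> R -> R)
  (ps' : 'rV[R]_ns -> R)
  (* h = g^-1 \o ghat, z_t = h (zhat_t), with inverse hinv *)
  (h hinv : 'rV[R]_(ne + ns) -> 'rV[R]_(ne + ns)) :
  (* A3.3.1: smooth and positive density p(z^e_t | e_t) *)
  (forall e, smooth (pe e)) ->
  (forall e ze, 0 < pe e ze) ->
  (* A3.3.2: conditional independence of the z^e_{t,i} given e_t *)
  (forall e i, density1 (pm e i)) ->
  (forall e ze, pe e ze = \prod_(i < ne) pm e i (ze 0 i)) ->
  (* stationary part: positive density over the latent space *)
  (forall zs, 0 < ps zs) ->
  (* estimated model has the same conditional-independence structure *)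
  (forall e i, density1 (pm' e i)) ->
  (forall e ze, pe' e ze = \prod_(i < ne) pm' e i (ze 0 i)) ->
  (forall zs, 0 <= ps' zs) ->
  (* A3.3.3: linear independence *)
  (forall ze : 'rV[R]_ne, exists es : 'I_ne.+1 -> 'I_E,
      row_free (\matrix_(j < ne)
         (wvec pm ze (es (lift ord0 j)) - wvec pm ze (es ord0)))) ->
  (* learning the data generation process: h is an invertible smooth map
     and the observational distributions match, i.e. the estimated latent
     density given e_t is the push-back of the true one along h *)
  cancel h hinv -> cancel hinv h -> smooth h -> smooth hinv ->
  (forall e zh,
     pe' e (lsubmx zh) * ps' (rsubmx zh) =
     pe e (lsubmx (h zh)) * ps (rsubmx (h zh)) * `|\det ('J h zh)|) ->
  (* conclusion: subspace identifiability of z^e_t *)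
  forall i : 'I_ne, exists hi : 'rV[R]_ne -> R,
    forall zh : 'rV[R]_(ne + ns), lsubmx (h zh) 0 i = hi (lsubmx zh).
Proof.
move=> spe pepos pmd pprod psp pm'd pprod' ps'nn hA hK hiK sh shi heq i.
have dh : forall x, differentiable h x := fun x => sh [::] x.
have dhi : forall x, differentiable hinv x := fun x => shi [::] x.
have dpe : forall e z, differentiable (pe e) z := fun e z => spe e [::] z.
have detnz := @det_ne0 _ _ h hinv hK hiK dh dhi.
pose Z := fun x => (lsubmx (h x) : 'rV[R]_ne).
have dZ : forall x, differentiable Z x.
  move=> x; apply: differentiable_comp => //; exact: differentiable_lsubmx.
pose L e := fun z : 'rV[R]_ne => ln (pe e z).
have dL : forall e z, differentiable (L e) z.
  move=> e z; apply: (differentiable_comp (dpe e z)); apply/derivable1_diffP.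
  apply: ex_derive; apply: is_derive1_ln; exact: pepos.
have dLexp : forall e z d, 'd (L e) z d = \sum_k d 0 k * (wvec pm z e) 0 k.
  move=> e z d; rewrite {1}(row_sum_delta d) linear_sum; apply: eq_bigr => k _.
  rewrite linearZ /= -deriveE // /L (@D_coord _ _ _ pe pm pepos pmd pprod) /wvec mxE.
  by [].
have c0 : forall y, 0 < ps (rsubmx (h y)) * `|\det ('J h y)|.
  by move=> y; rewrite mulr_gt0 // normr_gt0.
have pos' : forall y : 'rV[R]_(ne + ns), 0 < ps' (rsubmx y).
  move=> y; rewrite lt0r ps'nn andbT; apply/eqP => H0.
  have [es _] := hA 0.
  have := heq (es ord0) y; rewrite H0 mulr0 -mulrA => /esym /eqP.
  by rewrite mulf_eq0 (gt_eqF (pepos _ _)) (gt_eqF (c0 y)).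
have lnrel : forall e (y : 'rV[R]_(ne + ns)), ln (pe' e (lsubmx y)) =
   L e (Z y) + (ln (ps (rsubmx (h y)) * `|\det ('J h y)|) - ln (ps' (rsubmx y))).
  move=> e y.
  have -> : pe' e (lsubmx y) =
     pe e (Z y) * (ps (rsubmx (h y)) * `|\det ('J h y)|) * (ps' (rsubmx y))^-1.
    by rewrite mulrA -heq mulfK // gt_eqF.
  rewrite (@lnM R (pe e (Z y) * _) ((ps' (rsubmx y))^-1)); last 2 first.
  - by rewrite posrE mulr_gt0.
  - by rewrite posrE invr_gt0.
  rewrite (@lnM R (pe e (Z y)) (ps (rsubmx (h y)) * `|\det ('J h y)|)) ?posrE //.
  by rewrite (@lnV R (ps' (rsubmx y))) ?posrE // addrA.
have key : forall (x v : 'rV[R]_(ne + ns)), lsubmx v = 0 -> 'd Z x v = 0.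
  move=> x v lv.
  have [es hes] := hA (Z x).
  set d := 'd Z x v.
  have cst : forall e1 e2, \sum_k d 0 k * (wvec pm (Z x) e1 0 k - wvec pm (Z x) e2 0 k) = 0.
    move=> e1 e2.
    have -> : \sum_k d 0 k * (wvec pm (Z x) e1 0 k - wvec pm (Z x) e2 0 k) =
        'd (L e1) (Z x) d - 'd (L e2) (Z x) d.
      by rewrite !dLexp -sumrB; apply: eq_bigr => k _; rewrite mulrBr.
    have dGE : forall e, 'd (L e \o Z) x v = 'd (L e) (Z x) d.
      by move=> e; rewrite diff_comp.
    rewrite -!dGE -!deriveE; try exact: differentiable_comp.
    rewrite -deriveB; try exact/diff_derivable/differentiable_comp.
    apply: derive_const_dir => t /=.
    have Fy : forall y, L e1 (Z y) - L e2 (Z y) =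
        ln (pe' e1 (lsubmx y)) - ln (pe' e2 (lsubmx y)).
      by move=> y; rewrite !lnrel opprD addrACA subrr addr0.
    have lsh : lsubmx (t *: v + x) = lsubmx x.
      by rewrite linearD linearZ /= lv scaler0 add0r.
    by rewrite !fctE /= Fy lsh -Fy.
  set M := \matrix_(j < ne) _ in hes.
  have Mu : M^T \in unitmx by rewrite unitmx_tr -row_free_unit.
  have dM : d *m M^T = 0.
    apply/rowP => j; rewrite !mxE -[RHS](cst (es (lift ord0 j)) (es ord0)).
    by apply: eq_bigr => k _; rewrite !mxE.
  by rewrite -(mulmxK Mu d) dM mul0mx.
exists (fun a => Z (row_mx a 0) 0 i) => zh.
pose g := (fun N : 'rV[R]_ne => N 0 i) \o Z.
have dg : forall y, differentiable g y.
  by move=> y; apply: differentiable_comp => //; exact: differentiable_coord.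
have g0 : forall y, 'd g y (row_mx 0 (rsubmx zh)) = 0.
  move=> y; rewrite diff_comp //; last exact: differentiable_coord.
  by rewrite /= key ?linear0 // row_mxKl.
have := @const_line _ _ g (row_mx (lsubmx zh) 0) _ dg g0.
by rewrite /g /= add_row_mx add0r addr0 hsubmxK => <-.
Qed.
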